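(* Let $G$ be a graph of order $n$, vertex connectivity $\kappa$ and independence number $\alpha$. If $\kappa+\alpha=n$, then $$\operatorname{th}_{\operatorname{H}}(G)=\lceil 2\sqrt{n-\kappa}+\kappa-1\rceil=\lceil n-\alpha+2\sqrt{\alpha}-1\rceil.$$
   Context: All graphs are finite, simple and undirected. Hopping color change rule: a blue vertex $v$ may force a white vertex $w$ to become blue if $v$ has not previously performed a force and every neighbor of $v$ is blue. For an initial blue set $B$, a chronological list of forces of $B$ is a sequence of such forces applied one at a time until no further force is possible; its underlying unordered set is a set of forces of $B$. $B$ is a hopping forcing set if some chronological list of forces of $B$ turns all vertices blue. For a set of forces $\mathcal F$ of $B$, let $\mathcal F^{(0)}=B$ and for $t\geq1$ let $\mathcal F^{(t)}$ be the set of vertices $w\notin U_{t-1}:=\bigcup_{i=0}^{t-1}\mathcal F^{(i)}$ for which there is $(v\to w)\in\mathcal F$ with $v\in U_{t-1}$ and all neighbors of $v$ in $U_{t-1}$. $\operatorname{pt}_{\operatorname{H}}(G;\mathcal F)$ is the least $t$ with $\bigcup_{i=0}^t\mathcal F^{(i)}=V(G)$ ($\infty$ if none); $\operatorname{pt}_{\operatorname{H}}(G;B)$ is the minimum of $\operatorname{pt}_{\operatorname{H}}(G;\mathcal F)$ over sets of forces $\mathcal F$ of $B$ ($\infty$ if $B$ is not a hopping forcing set). $\operatorname{th}_{\operatorname{H}}(G)=\min_{B\subseteq V(G)}\big(|B|+\operatorname{pt}_{\operatorname{H}}(G;B)\big)$. *)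

(* Defs.v *)
(* Simple graphs on a finType T are given by an edge
   relation e : rel T, assumed symmetric and irreflexive in the theorem. *)
From HB Require Import structures.
From mathcomp Require Import all_boot all_order all_algebra.
From mathcomp Require Import reals.
From Stdlib Require Import ClassicalEpsilon.

Set Implicit Arguments.
Unset Strict Implicit.
Unset Printing Implicit Defensive.

Section Graph.
Variables (T : finType) (e : rel T).

Definition del_rel (S : {set T}) : rel T :=
  [rel x y | [&& e x y, x \notin S & y \notin S]].

Definition separating (S : {set T}) : bool :=
  (#|~: S| <= 1) ||
  [exists u, exists v, [&& u \notin S, v \notin S & ~~ connect (del_rel S) u v]].

(* kappa(G) = min |S| over separating S (S = V is always separating) *)
Definition vconn : nat := \big[minn/#|T|]_(S : {set T} | separating S) #|S|.

Definition independent (S : {set T}) : bool :=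
  [forall x in S, forall y in S, ~~ e x y].

Definition indep_num : nat := \max_(S : {set T} | independent S) #|S|.

Definition nbrs_in (v : T) (U : {set T}) : bool := [forall u, e v u ==> (u \in U)].

(* v may hop-force w given the blue set and the set of vertices that
   already performed a force *)
Definition can_force (blue used : {set T}) (v w : T) : bool :=
  [&& v \in blue, v \notin used, w \notin blue & nbrs_in v blue].

(* s is a chronological list of forces starting from the blue set [blue]
   with already-used forcers [used]: each force is valid when applied, and
   at the end no further force is possible *)
Fixpoint chron_ok (blue used : {set T}) (s : seq (T * T)) : bool :=
  match s with
  | [::] => [forall v, forall w, ~~ can_force blue used v w]
  | (v, w) :: s' => can_force blue used v w && chron_ok (w |: blue) (v |: used) s'
  end.

Definition chron_list (B : {set T}) (s : seq (T * T)) : bool := chron_ok B set0 s.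

Definition forces_set (B : {set T}) (F : {set T * T}) : Prop :=
  exists s, chron_list B s /\ F = [set x in s].

Definition hopping_forcing_set (B : {set T}) : Prop :=
  exists s, chron_list B s /\ foldr (fun f U => f.2 |: U) B s = setT.

Fixpoint rounds (F : {set T * T}) (B : {set T}) (t : nat) : {set T} :=
  match t with
  | 0 => B
  | t'.+1 =>
      let U := rounds F B t' in
      U :|: [set w | (w \notin U) &&
                     [exists v, [&& (v, w) \in F, v \in U & nbrs_in v U]]]
  end.

(* |B| + t with t such that U_t = V for some set of forces F of B;
   th_H(G) is the minimum of these values over all B, F, t
   (minimising over t gives pt_H(G;F), over F gives pt_H(G;B)). *)
Definition th_achieves (k : nat) : Prop :=
  exists B F t, forces_set B F /\ rounds F B t = setT /\ k = #|B| + t.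

Definition th_achievesb (k : nat) : bool :=
  if excluded_middle_informative (th_achieves k) then true else false.

Lemma th_achieves_exists : exists k, th_achievesb k.
Proof.
exists #|T|; rewrite /th_achievesb.
case: excluded_middle_informative => // H; exfalso; apply: H.
exists setT, set0, 0; split; last by rewrite cardsT addn0.
exists [::]; split; last by apply/setP => x; rewrite !inE.
by apply/forallP => v; apply/forallP => w; rewrite /can_force !inE.
Qed.

Definition th_H : nat := ex_minn th_achieves_exists.

End Graph.

Definition simple_graph (T : finType) (e : rel T) : Prop :=
  symmetric e /\ irreflexive e.

(* Main.v *)
Require Import Defs.
From HB Require Import structures.
From mathcomp Require Import all_boot all_order all_algebra.
From mathcomp Require Import reals.
From mathcomp Require Import zify.
From mathcomp Require Import ring lra.
From Stdlib Require Import ClassicalEpsilon.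
Import Order.TTheory GRing.Theory Num.Theory.
Set Implicit Arguments. Unset Strict Implicit. Unset Printing Implicit Defensive.

Lemma bigmin_le (I : finType) (P : pred I) (F : I -> nat) m x :
  P x -> \big[minn/m]_(i | P i) F i <= F x.
Proof.
move=> Px; have : x \in index_enum I by rewrite mem_index_enum.
elim: (index_enum I) => [//|a r IH]; rewrite inE big_cons.
case/predU1P => [<-|xr]; first by rewrite Px geq_minl.
case: (P a); last exact: IH.
by rewrite geq_min IH ?orbT.
Qed.

Lemma conn_fwd (T : finType) (r : rel T) (A : {set T}) x y :
  (forall a b, r a b -> a \in A -> b \in A) -> connect r x y -> x \in A -> y \in A.
Proof.
move=> H /connectP [p pp ->]; elim: p x pp => //= z p IH x /andP[rxz pp] xA.
exact: IH pp (H _ _ rxz xA).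
Qed.

Lemma rounds_succ (T : finType) (e : rel T) F B j :
  rounds e F B j.+1 = rounds e F B j :|: [set w | (w \notin rounds e F B j) &&
     [exists v, [&& (v, w) \in F, v \in rounds e F B j & nbrs_in e v (rounds e F B j)]]].
Proof. by []. Qed.

Lemma rounds_mono (T : finType) (e : rel T) F B i j : i <= j ->
  rounds e F B i \subset rounds e F B j.
Proof.
elim: j => [|j IH]; first by rewrite leqn0 => /eqP->.
rewrite leq_eqVlt => /predU1P [->//|/IH H].
by apply: subset_trans H _; rewrite rounds_succ subsetUl.
Qed.

Definition readyset (T : finType) (e : rel T) (U : {set T}) := [set v in U | nbrs_in e v U].
Definition targets (T : finType) (F : {set T * T}) (X : {set T}) :=
  [set w | [exists v in X, (v, w) \in F]].

Lemma nbrs_in_mono (T : finType) (e : rel T) v (U V : {set T}) : U \subset V -> nbrs_in e v U -> nbrs_in e v V.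
Proof.
move=> /subsetP UV /forallP H; apply/forallP => u; apply/implyP => evu.
by apply: UV; apply: (implyP (H u)).
Qed.

Lemma ready_mono (T : finType) (e : rel T) F B i j : i <= j ->
  readyset e (rounds e F B i) \subset readyset e (rounds e F B j).
Proof.
move=> ij; have sub := rounds_mono e F B ij.
apply/subsetP => v; rewrite !inE => /andP[vU nv].
by rewrite (subsetP sub _ vU) (nbrs_in_mono sub nv).
Qed.

Lemma rounds_sub (T : finType) (e : rel T) F B j i : i <= j.+1 ->
  rounds e F B i \subset B :|: targets F (readyset e (rounds e F B j)).
Proof.
elim: i => [|i IH] ij; first exact: subsetUl.
rewrite rounds_succ subUset IH ?(ltnW ij) //=.
apply/subsetP => w; rewrite inE => /andP[_ /existsP [v /and3P[vw vU nv]]].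
rewrite inE; apply/orP; right; rewrite inE; apply/existsP; exists v.
rewrite vw andbT; have sub := @ready_mono _ e F B i j ij.
by apply: (subsetP sub); rewrite inE vU nv.
Qed.

Fixpoint tgt (T : eqType) (s : seq (T * T)) (v : T) : T :=
  match s with [::] => v | (a, b) :: s' => if a == v then b else tgt s' v end.

Lemma tgtP (T : eqType) (s : seq (T * T)) v w :
  uniq (map fst s) -> (v, w) \in s -> tgt s v = w.
Proof.
elim: s => [//|[a b] s IH] /= /andP[nas us]; rewrite inE.
case/predU1P => [[-> ->]|vs]; first by rewrite eqxx.
case: eqP => [av|_]; last exact: IH.
by move: nas; rewrite av; case/negP; apply/mapP; exists (v, w).
Qed.

Lemma card_targets (T : finType) (s : seq (T * T)) X : uniq (map fst s) ->
  #|targets [set x in s] X| <= #|X|.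
Proof.
move=> us; apply: leq_trans (leq_imset_card (tgt s) X); apply: subset_leq_card.
apply/subsetP => w; rewrite inE => /existsP [v /andP [vX]]; rewrite inE => vws.
by apply/imsetP; exists v => //; rewrite (tgtP us vws).
Qed.

Lemma chron_uniq (T : finType) (e : rel T) blue used s :
  chron_ok e blue used s -> uniq (map fst s) && all (fun x => x \notin used) (map fst s).
Proof.
elim: s blue used => [//|[v w] s IH] blue used /= /andP [cf /IH /andP [us al]].
rewrite us andbT; move: cf => /and4P [_ vu _ _]; rewrite vu /=.
apply/andP; split.
  by apply/negP => vs; move/allP: al => /(_ v vs); rewrite !inE eqxx.
by apply/allP => x xs; move/allP: al => /(_ x xs); rewrite inE negb_or => /andP[].
Qed.

Lemma sep_bound (T : finType) (e : rel T) (U : {set T}) (x : T) :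
  x \notin U -> readyset e U != set0 ->
  #|readyset e U| + #|~: U| + vconn e <= #|T|.
Proof.
move=> xU /set0Pn [u uR].
set R := readyset e U; set S := ~: (R :|: ~: U).
have RU : R \subset U by apply/subsetP => v; rewrite /R inE => /andP[].
have sepS : separating e S.
  apply/orP; right; apply/existsP; exists u; apply/existsP; exists x.
  rewrite !(in_setC, in_setU) !negbK uR xU orbT /=.
  apply/negP => /conn_fwd H.
  have : x \in R.
    apply: H uR => a b; rewrite /del_rel /= /S !(in_setC, in_setU) !negbK => /and3P [eab _ bRU] aR.
    move: aR; rewrite /R inE => /andP [aU /forallP /(_ b)]; rewrite eab /= => bU.
    by move: bRU; rewrite bU /= orbF.
  by rewrite /R inE (negbTE xU).
have vS : vconn e <= #|S| := bigmin_le (fun S0 : {set T} => #|S0|) #|T| sepS.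
have : #|S| + #|R :|: ~: U| = #|T| by rewrite addnC cardsC.
have I0 : R :&: ~: U = set0.
  apply/setP => v; rewrite /R !inE; case vU: (v \in U) => //=; by rewrite andbF.
rewrite cardsU I0 cards0 subn0; lia.
Qed.

Lemma lower (T : finType) (e : rel T) B s t :
  chron_list e B s -> rounds e [set x in s] B t = setT ->
  exists i, i <= t /\ #|T| + i * vconn e <= i.+1 * #|B|.
Proof.
move=> /chron_uniq /andP [us _] Ut; set F := [set x in s].
case: (boolP (readyset e B == set0)) => [/eqP R0 | R0].
  have H : forall i, rounds e F B i = B.
    elim=> [//|i IH]; rewrite rounds_succ IH; apply/setP => w; rewrite !inE.
    case: (w \in B) => //=; apply/negbTE/existsP => -[v /and3P [_ vB nv]].
    suff : v \in readyset e B by rewrite R0 inE.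
    by rewrite inE vB nv.
  by exists 0; split => //; rewrite mul0n addn0 mul1n -(H t) Ut cardsT.
have key : forall j, #|rounds e F B j| + j * vconn e <= j.+1 * #|B| \/
   exists i, i <= j /\ #|T| + i * vconn e <= i.+1 * #|B|.
  elim=> [|j IH]; first by left; rewrite mul0n addn0 mul1n.
  case: IH => [IH|[i [ij Hi]]]; last by right; exists i; split => //; apply: leqW.
  case: (pickP (fun x => x \notin rounds e F B j)) => [x xU|allin]; last first.
    right; exists j; split => //; have : rounds e F B j = setT.
      by apply/setP => x; rewrite inE; move: (allin x) => /= /negbFE.
    by move=> Uj; move: IH; rewrite Uj cardsT.
  left.
  have Rj : readyset e (rounds e F B j) != set0.
    apply/negP => /eqP Rj; move/negP: R0; apply; rewrite -subset0 -Rj.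
    exact: (@ready_mono _ e F B 0 j).
  have sb := sep_bound xU Rj.
  have s1 := subset_leq_card (@rounds_sub _ e F B j j.+1 (leqnn _)).
  have s2 := leq_card_setU B (targets F (readyset e (rounds e F B j))).
  have s3 := card_targets (readyset e (rounds e F B j)) us.
  have s4 := cardsC (rounds e F B j).
  rewrite -/F in s3.
  move: s2 => [s2 _].
  nia.
case: (key t) => [H|[i [it Hi]]]; last by exists i.
by move: H; rewrite Ut cardsT => H; exists t.
Qed.
Lemma upper (T : finType) (e : rel T) (I : {set T}) k t (x0 : T) :
  independent e I -> 0 < k -> k <= #|I| -> #|I| <= k * t.+1 ->
  th_achieves e (#|~: I| + k + t).
Proof.
move=> indI k0 kI It.
set L := enum I; have uL : uniq L := enum_uniq _.
set a := #|I|; have sL : size L = a by rewrite /a cardE.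
have inI : forall i, i < a -> nth x0 L i \in I.
  by move=> i ia; rewrite -mem_enum mem_nth ?sL.
have nbI : forall v (U : {set T}), v \in I -> ~: I \subset U -> nbrs_in e v U.
  move=> v U vI /subsetP IU; apply/forallP => u; apply/implyP => evu; apply: IU.
  rewrite inE; apply/negP => uI.
  by move/forallP: indI => /(_ v); rewrite vI /= => /forallP /(_ u); rewrite uI evu.
have tk : forall i m, i < a -> (nth x0 L i \in take m L) = (i < m).
  by move=> i m ia; rewrite in_take ?mem_nth ?sL // index_uniq ?sL.
have tr : forall m, m < a -> [set y in take m.+1 L] = nth x0 L m |: [set y in take m L].
  by move=> m ma; apply/setP => y; rewrite (take_nth x0) ?sL // !inE mem_rcons inE.
set sq := fun m d => [seq (nth x0 L i, nth x0 L (i + k)) | i <- iota m d].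
have chron : forall d m, m + d = a - k ->
   chron_ok e (~: I :|: [set y in take (m + k) L]) [set y in take m L] (sq m d).
  elim=> [|d IH] m md.
    have -> : m + k = a by lia.
    rewrite /sq /=; apply/forallP => v; apply/forallP => w.
    rewrite /can_force; apply/negP => /and4P [_ _ + _].
    rewrite !inE; case: (boolP (w \in I)) => // wI.
    by rewrite -sL take_size mem_enum wI.
  rewrite /sq /= -/(sq m.+1 d); apply/andP; split.
    rewrite /can_force !inE negb_or !tk ?(inI (m + k)) //=; try lia.
    rewrite !ltnn /= (_ : m < m + k) ?orbT /=; last lia.
    by apply: nbI; [apply: inI; lia | apply: subsetUl].
  rewrite setUCA -tr; last lia.
  rewrite -tr; last lia.
  rewrite -addSn; apply: IH; lia.
set B := ~: I :|: [set y in take k L].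
set F := [set y in sq 0 (a - k)].
have BU : forall r, B \subset rounds e F B r.
  by move=> r; apply: (@rounds_mono _ e F B 0 r).
have CU : forall r, ~: I \subset rounds e F B r.
  by move=> r; apply: subset_trans (BU r); apply: subsetUl.
have rd : forall r j, j < a -> j < k * r.+1 -> nth x0 L j \in rounds e F B r.
  elim=> [|r IH] j ja jr.
    by rewrite /= inE; apply/orP; right; rewrite inE tk //; lia.
  rewrite rounds_succ inE; case: (boolP (nth x0 L j \in rounds e F B r)) => //= jU.
  have jk : k * r.+1 <= j.
    by rewrite leqNgt; apply/negP => jr'; move: jU; rewrite IH.
  rewrite inE jU /=; apply/existsP; exists (nth x0 L (j - k)).
  have iU : nth x0 L (j - k) \in rounds e F B r by apply: IH; lia.
  rewrite iU nbI ?CU ?inI ?andbT //; last lia.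
  rewrite inE; apply/mapP; exists (j - k); first by rewrite mem_iota; lia.
  by rewrite subnK //; lia.
have Ut : rounds e F B t = setT.
  apply/setP => y; rewrite inE; case: (boolP (y \in I)) => yI; last first.
    by apply: (subsetP (CU t)); rewrite inE.
  have yL : y \in L by rewrite mem_enum.
  rewrite -(nth_index x0 yL); apply: rd.
    by move: yL; rewrite -index_mem sL.
  by apply: leq_trans It; move: yL; rewrite -index_mem sL.
exists B, F, t; split; last split => //.
  exists (sq 0 (a - k)); split => //.
  have := chron (a - k) 0 (add0n _); rewrite add0n take0.
  by rewrite (_ : [set y in [::]] = set0) //; apply/setP => y; rewrite !inE.
congr (_ + t); rewrite cardsU.
have -> : ~: I :&: [set y in take k L] = set0.
  apply/setP => y; rewrite !inE; apply/negbTE/andP => -[/negP yI /mem_take].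
  by rewrite mem_enum.
rewrite cards0 subn0 cardsE; congr (_ + _).
by rewrite cardsE (card_uniqP _) ?take_uniq // size_takel // sL.
Qed.
Lemma ar1 a N k : 4 * a <= N * N -> (N = k.*2 \/ N = k.*2.+1) -> a <= k * (N - k).
Proof. move=> H [E|E]; subst N; rewrite -addnn in H *.
  rewrite addnK; nia.
rewrite -addnS addKn; nia. Qed.

Lemma amgm x y : 4 * (x * y) <= (x + y) * (x + y).
Proof. case: (leqP x y) => h.
  have -> : y = x + (y - x) by lia. set d := y - x; nia.
have -> : x = y + (x - y) by lia. set d := x - y; nia. Qed.
Lemma ar3 al ka b i : al + ka + i * ka <= i.+1 * b -> 4 * al <= (b - ka + i.+1) * (b - ka + i.+1).
Proof. move=> H. have kb : ka <= b by nia. have E : b = (b - ka) + ka by lia.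
move: H; rewrite {1}E; set k := b - ka => H.
have h1 : al <= i.+1 * k by rewrite mulnDr in H; lia.
apply: leq_trans (amgm k i.+1); lia. Qed.
Local Open Scope ring_scope.

Lemma real_part (R : realType) (a N c : nat) : (4*a <= N*N)%N -> ~~ (4*a <= N.-1 * N.-1)%N -> (0 < N)%N ->
  Num.ceil (2 * Num.sqrt (a%:R : R) + c%:R - 1) = (c + N.-1)%:Z.
Proof.
move=> h1 h2 h3; apply: ceil_def.
have -> : (((c + N.-1)%N%:Z - 1)%:~R : R) = (c + N.-1)%:R - 1 by rewrite intrB.
have -> : ((c + N.-1)%N%:Z%:~R : R) = (c + N.-1)%:R by [].
have NE : N = N.-1.+1 by rewrite prednK.
set q := Num.sqrt (a%:R : R).
have q0 : 0 <= q := sqrtr_ge0 _.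
have qq : q ^+ 2 = a%:R by rewrite sqr_sqrtr ?ler0n.
have r1 : 4 * a%:R <= (N.-1.+1)%:R * (N.-1.+1)%:R :> R.
  by rewrite -NE -!natrM ler_nat.
have r2 : (N.-1)%:R * (N.-1)%:R < 4 * a%:R :> R.
  by rewrite -!natrM ltr_nat ltnNge.
move: r1 r2; rewrite -qq natrD -(natr1 N.-1).
set M := (N.-1)%:R.
have M0 : 0 <= M by rewrite ler0n.
move=> r1 r2; apply/andP; split; nra.
Qed.

Theorem lemma3p11 (R : realType) (T : finType) (e : rel T) :
  simple_graph e -> (0 < #|T|)%N ->
  (vconn e + indep_num e)%N = #|T| ->
  ((th_H e)%:Z =
     Num.ceil (2 * Num.sqrt (#|T|%:R - (vconn e)%:R) + (vconn e)%:R - 1 : R))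
  /\
  (Num.ceil (2 * Num.sqrt (#|T|%:R - (vconn e)%:R) + (vconn e)%:R - 1 : R) =
     Num.ceil (#|T|%:R - (indep_num e)%:R + 2 * Num.sqrt (indep_num e)%:R - 1 : R)).
Proof.
move=> _ n0 Hn.
case/card_gt0P: n0 => x _.
have sep : separating e (~: [set x]) by apply/orP; left; rewrite setCK cards1.
have vS : (vconn e <= #|~: [set x]|)%N := bigmin_le (fun S0 : {set T} => #|S0|) #|T| sep.
have := cardsC [set x]; rewrite cards1 => cx.
have a1 : (0 < indep_num e)%N by lia.
have i0 : independent e set0 by apply/forallP => y; rewrite inE.
have [I indI cI] : exists2 I, independent e I & #|I| = indep_num e.
  rewrite /indep_num (bigop.bigmax_eq_arg set0) //.
  by case: arg_maxnP => // I indI _; exists I.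
have cC : #|~: I| = vconn e by have := cardsC I; lia.
have ex : exists N, (4 * indep_num e <= N * N)%N.
  by exists (indep_num e).+1; have := amgm (indep_num e) 1; rewrite muln1 addn1.
case: (ex_minnP ex) => N PN minN.
have N1 : (N <= (indep_num e).+1)%N.
  by apply: minN; have := amgm (indep_num e) 1; rewrite muln1 addn1.
have N2 : (2 <= N)%N by nia.
have thE : th_H e = (vconn e + N.-1)%N.
  have ach : th_achieves e (vconn e + N.-1).
    set k := N./2.
    have Nk : N = k.*2 \/ N = k.*2.+1.
      by have := odd_double_half N; case: (odd N) => /= <-; [right|left].
    have k0 : (0 < k)%N by case: Nk => E; lia.
    have kI : (k <= #|I|)%N by case: Nk => E; lia.
    have It : (#|I| <= k * (N - k - 1).+1)%N.
      have := ar1 PN Nk; rewrite cI; case: Nk => E; rewrite (_ : (N - k - 1).+1 = N - k)%N //; lia.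
    have := upper x indI k0 kI It; rewrite cC.
    by rewrite (_ : vconn e + k + (N - k - 1) = vconn e + N.-1)%N //; case: Nk => E; lia.
  have low : forall m, th_achieves e m -> (vconn e + N.-1 <= m)%N.
    move=> m [B [F [t [[s [cs ->]] [Ut ->]]]]].
    have [i [it Hi]] := lower cs Ut.
    have H : (indep_num e + vconn e + i * vconn e <= i.+1 * #|B|)%N by lia.
    have kb : (vconn e <= #|B|)%N by nia.
    have := minN _ (ar3 H); lia.
  rewrite /th_H; case: ex_minnP => m Hm Hmin.
  have Hm' : th_achieves e m.
    by move: Hm; rewrite /th_achievesb; case: excluded_middle_informative.
  have : (m <= vconn e + N.-1)%N.
    by apply: Hmin; rewrite /th_achievesb; case: excluded_middle_informative.
  by have := low m Hm'; lia.
have sq : (#|T|%:R - (vconn e)%:R : R) = (indep_num e)%:R.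
  by rewrite -Hn natrD [X in X - _]addrC addrK.
have sq2 : (#|T|%:R - (indep_num e)%:R : R) = (vconn e)%:R.
  by rewrite -Hn natrD addrK.
rewrite sq sq2; split.
  rewrite thE; symmetry; apply: real_part => //; last lia.
  by apply/negP => h; have := minN _ h; lia.
by congr Num.ceil; congr (_ - 1); rewrite addrC.
Qed.
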